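(* Let $F\le \mathrm{SL}_2(\mathbb{Z})$ be a free group with free basis $s_1,\dots,s_d$, and let $S=\{s_1^{\pm1},\dots,s_d^{\pm1}\}$. Let $p$ be a prime such that the reduction map $\pi_p:\mathrm{SL}_2(\mathbb{Z})\to\mathrm{SL}_2(\mathbb{F}_p)$ is injective on $S$, and identify $S$ with $\pi_p(S)$. Let $\|\cdot\|$ be a norm on $M_2(\mathbb{R})$ satisfying $\|X\|\ge\|X\|_\infty$ for all $X\in M_2(\mathbb{R})$, let \[\eta=\sup_{g,h\in\mathrm{SL}_2(\mathbb{Z})}\frac{\|gh\|}{\|g\|\,\|h\|},\] assume $\eta<\infty$, and let $M=\max_{s\in S}\|s\|$. If $\mathfrak g$ is the girth of $\mathrm{Cay}(\mathrm{SL}_2(\mathbb{F}_p),S)$, then \[(\eta M)^{\lceil \mathfrak g/2\rceil}\ \ge\ \frac{\eta\, p}{2}.\]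
   Context: $\|X\|_\infty$ denotes the maximum of the absolute values of the entries of the matrix $X$. For a group $G$ and symmetric $T=T^{-1}\subseteq G$, $\mathrm{Cay}(G,T)$ is the graph on $G$ with edges $\{g,gt\}$, $g\in G$, $t\in T$; its girth is the smallest $k\ge1$ for which there exist $t_1,\dots,t_k\in T$ with $t_it_{i+1}\ne e$ for all $1\le i<k$ and $t_1\cdots t_k=e$. *)

(* Defs.v *)
From HB Require Import structures.
From mathcomp Require Import all_boot all_order all_algebra.
Set Implicit Arguments. Unset Strict Implicit. Unset Printing Implicit Defensive.
Import Order.TTheory GRing.Theory Num.Theory.
Local Open Scope ring_scope.

Definition inSL2Z (g : 'M[int]_2) : Prop := \det g = 1.

Definition letter (d : nat) (s : 'I_d -> 'M[int]_2) (x : 'I_d * bool) : 'M[int]_2 :=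
  if x.2 then s x.1 else invmx (s x.1).

Definition reduced_word (d : nat) (w : seq ('I_d * bool)) : bool :=
  match w with
  | [::] => true
  | x :: w' => path (fun a b : 'I_d * bool => (a.1 != b.1) || (a.2 == b.2)) x w'
  end.

Definition eval_word (d : nat) (s : 'I_d -> 'M[int]_2) (w : seq ('I_d * bool)) : 'M[int]_2 :=
  foldr (fun x acc => letter s x * acc) 1 w.

Definition free_basis (d : nat) (s : 'I_d -> 'M[int]_2) : Prop :=
  forall w : seq ('I_d * bool), reduced_word w -> w != [::] -> eval_word s w != 1.

Definition redp (p : nat) (g : 'M[int]_2) : 'M['F_p]_2 := map_mx (fun z : int => z%:~R) g.

Definition toR (R : realFieldType) (g : 'M[int]_2) : 'M[R]_2 := map_mx (fun z : int => z%:~R) g.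

Definition is_norm (R : realFieldType) (N : 'M[R]_2 -> R) : Prop :=
  [/\ forall X, N X = 0 -> X = 0,
      forall (a : R) X, N (a *: X) = `|a| * N X
    & forall X Y, N (X + Y) <= N X + N Y].

Definition maxabs (R : realFieldType) (X : 'M[R]_2) : R :=
  \big[Num.max/0]_(i < 2) \big[Num.max/0]_(j < 2) `|X i j|.

(* girth of Cay(G,T) following the paper: a k-cycle is t_1..t_k in T with
   t_i t_{i+1} != e and t_1 ... t_k = e *)
Definition has_cycle (p : nat) (T : pred 'M['F_p]_2) (k : nat) : Prop :=
  exists ts : seq 'M['F_p]_2,
    [/\ size ts = k, all T ts,
        (forall i : nat, (i.+1 < size ts)%N -> nth 0 ts i * nth 0 ts i.+1 != 1)
      & foldr (fun t acc => t * acc) 1 ts = 1].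

Definition is_girth (p : nat) (T : pred 'M['F_p]_2) (k : nat) : Prop :=
  [/\ (1 <= k)%N, has_cycle T k & forall k', (1 <= k')%N -> (k' < k)%N -> ~ has_cycle T k'].

(* Main.v *)
Require Import Defs.
From HB Require Import structures.
From mathcomp Require Import all_boot all_order all_algebra ring lra zify.
Import Order.TTheory GRing.Theory Num.Theory.
Local Open Scope ring_scope.
Set Implicit Arguments. Unset Strict Implicit.

Section Aux.
Variables (d : nat) (s : 'I_d -> 'M[int]_2).
Hypothesis sSL : forall i, inSL2Z (s i).

Lemma s_unit i : s i \in unitmx.
Proof. by rewrite unitmxE (sSL i) unitr1. Qed.

Lemma letter_det x : \det (letter s x) = 1.
Proof.
rewrite /letter; case: x.2; first exact: sSL.
by rewrite det_inv (sSL _) invr1.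
Qed.

Definition flip (x : 'I_d * bool) := (x.1, ~~ x.2).

Lemma letter_flip x : letter s (flip x) * letter s x = 1.
Proof.
rewrite /letter /flip /=; case: x.2 => /=; rewrite -mulmxE.
  exact: mulVmx (s_unit _).
exact: mulmxV (s_unit _).
Qed.

Lemma eval_cat w1 w2 : eval_word s (w1 ++ w2) = eval_word s w1 * eval_word s w2.
Proof.
elim: w1 => [|x w IH] /=; first by rewrite mul1r.
by rewrite /eval_word /= -/(eval_word s _) IH mulrA.
Qed.

Fixpoint inv_word (w : seq ('I_d * bool)) :=
  if w is x :: w' then rcons (inv_word w') (flip x) else [::].

Lemma size_inv w : size (inv_word w) = size w.
Proof. by elim: w => //= x w IH; rewrite size_rcons IH. Qed.

Lemma eval_inv w : eval_word s (inv_word w) * eval_word s w = 1.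
Proof.
elim: w => [|x w IH] /=; first by rewrite mul1r.
rewrite -cats1 eval_cat /eval_word /= -!/(eval_word s _) mulr1.
by rewrite -mulrA (mulrA (letter s _)) letter_flip mul1r.
Qed.

Lemma eval_det w : \det (eval_word s w) = 1.
Proof.
elim: w => [|x w IH] /=; first by rewrite det1.
by rewrite /eval_word /= -/(eval_word s _) -mulmxE det_mulmx letter_det IH mulr1.
Qed.

Lemma redpM (p : nat) (a b : 'M[int]_2) : redp p (a * b) = redp p a * redp p b.
Proof. by rewrite /redp -!mulmxE; exact: (map_mxM (intmul (1 : 'F_p))). Qed.

Lemma redp1 (p : nat) : redp p 1 = 1.
Proof. by rewrite /redp; exact: (map_mx1 (intmul (1 : 'F_p))). Qed.

End Aux.

Lemma redp_eval d (s : 'I_d -> 'M[int]_2) p xs :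
  redp p (eval_word s xs) = foldr (fun t acc => t * acc) 1 (map (fun x => redp p (letter s x)) xs).
Proof.
elim: xs => [|x w IH] /=; first exact: redp1.
by rewrite /eval_word /= -/(eval_word s _) redpM IH.
Qed.

Lemma lift_seq d (s : 'I_d -> 'M[int]_2) p (ts : seq 'M['F_p]_2) :
  all (fun X : 'M['F_p]_2 => [exists x : 'I_d * bool, X == redp p (letter s x)]) ts ->
  exists xs, map (fun x => redp p (letter s x)) xs = ts.
Proof.
elim: ts => [|t ts IH] /=; first by exists [::].
case/andP => /existsP [x /eqP ->] /IH [xs <-]; by exists (x :: xs).
Qed.

Lemma reduced_of d (s : 'I_d -> 'M[int]_2) p xs :
  (forall i, inSL2Z (s i)) ->
  (forall i : nat, (i.+1 < size xs)%N ->
     nth 0 (map (fun x => redp p (letter s x)) xs) i *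
     nth 0 (map (fun x => redp p (letter s x)) xs) i.+1 != 1) ->
  reduced_word xs.
Proof.
move=> sSL H; case: xs H => [|x w] // H; rewrite /reduced_word.
apply/(pathP x) => i Hi.
have := H i; rewrite [size _]/= ltnS => /(_ Hi).
rewrite (nth_map x); last by rewrite /= ltnW.
rewrite (nth_map x) //.
rewrite [nth x (x :: w) i.+1]/=.
set a := nth x (x :: w) i; set b := nth x w i; clearbody a b.
apply: contraR; rewrite negb_or negbK => /andP [/eqP e1 e2].
have -> : a = flip b.
  move: e1 e2; case: a => a1 a2; case: b => b1 b2 /= -> ; rewrite /flip /=.
  by case: a2; case: b2.
by rewrite -redpM letter_flip // redp1.
Qed.

Lemma maxabs_ge (R : realFieldType) (X : 'M[R]_2) i j : `|X i j| <= maxabs X.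
Proof.
apply: le_trans (le_bigmax _ _ i); exact: (le_bigmax _ (fun j => `|X i j|) j).
Qed.

Lemma maxabs_ge0 (R : realFieldType) (X : 'M[R]_2) : 0 <= maxabs X.
Proof. exact: le_trans (normr_ge0 _) (maxabs_ge X 0 0). Qed.

Section Norm.
Variables (R : realFieldType) (d : nat) (s : 'I_d -> 'M[int]_2) (N : 'M[R]_2 -> R) (eta M : R).
Hypotheses (sSL : forall i, inSL2Z (s i)) (Nn : is_norm N)
  (Nmax : forall X : 'M[R]_2, maxabs X <= N X)
  (Heta : forall a b : 'M[int]_2, inSL2Z a -> inSL2Z b ->
      N (toR R (a * b)) / (N (toR R a) * N (toR R b)) <= eta)
  (HM : M = \big[Num.max/0]_(x : 'I_d * bool) N (toR R (letter s x))).

Lemma N_ge0 X : 0 <= N X.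
Proof. exact: le_trans (maxabs_ge0 X) (Nmax X). Qed.

Lemma N_gt0 a : inSL2Z a -> 0 < N (toR R a).
Proof.
move=> Ha; rewrite lt_def N_ge0 andbT; case: Nn => N0 _ _; apply/eqP => /N0 H0.
have a0 : a = 0.
  apply/matrixP => i j; have := congr1 (fun X : 'M[R]_2 => X i j) H0.
  by rewrite /toR !mxE => /eqP; rewrite intr_eq0 => /eqP.
by move: Ha; rewrite /inSL2Z a0 det0.
Qed.

Lemma subm a b : inSL2Z a -> inSL2Z b ->
  N (toR R (a * b)) <= eta * (N (toR R a) * N (toR R b)).
Proof.
move=> Ha Hb; have := Heta Ha Hb.
by rewrite ler_pdivrMr // mulr_gt0 // N_gt0.
Qed.

Lemma SL1 : inSL2Z 1. Proof. by rewrite /inSL2Z det1. Qed.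

Lemma eta_gt0 : 0 < eta.
Proof.
have := Heta SL1 SL1; rewrite mulr1; apply: lt_le_trans.
by rewrite divr_gt0 ?mulr_gt0 ?(N_gt0 SL1).
Qed.

Lemma letter_leM x : N (toR R (letter s x)) <= M.
Proof. rewrite HM; exact: (le_bigmax _ (fun x => N (toR R (letter s x))) x). Qed.

Lemma M_ge0 : 0 <= M.
Proof. rewrite HM; exact: bigmax_ge_id. Qed.

Lemma letterSL x : inSL2Z (letter s x).
Proof. exact: letter_det. Qed.

Lemma evalSL w : inSL2Z (eval_word s w).
Proof. exact: eval_det. Qed.

Lemma etaM_ge1 (x : 'I_d * bool) : 1 <= eta * M.
Proof.
have h1 : 1 <= eta * N (toR R 1).
  have := subm SL1 SL1; rewrite mulr1.
  have := N_gt0 SL1 => Hp Hle.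
  by rewrite -(ler_pM2r Hp) mul1r -mulrA.
have h2 : N (toR R 1) <= eta * (M * M).
  rewrite -(letter_flip sSL x); apply: le_trans (subm (letterSL _) (letterSL _)) _.
  rewrite ler_wpM2l ?(ltW eta_gt0) // ler_pM ?N_ge0 //; exact: letter_leM.
have h3 : 1 <= (eta * M) ^+ 2.
  apply: le_trans h1 _; rewrite expr2 mulrACA -mulrA ler_wpM2l ?(ltW eta_gt0) //.
have h0 : 0 <= eta * M by rewrite mulr_ge0 ?M_ge0 ?(ltW eta_gt0).
move: h3 h0; rewrite expr2; set y := eta * M; nra.
Qed.

Lemma word_bound w : w != [::] ->
  N (toR R (eval_word s w)) <= eta ^+ (size w).-1 * M ^+ size w.
Proof.
elim: w => [|x w IH] // _.
case: w IH => [|y w] IH.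
  by rewrite /eval_word /= mulr1 expr0 mul1r expr1; exact: letter_leM.
have IH' := IH isT.
change (eval_word s (x :: y :: w)) with (letter s x * eval_word s (y :: w)).
apply: le_trans (subm (letterSL x) (evalSL _)) _.
rewrite [size _]/= exprS.
have -> : eta ^+ (size w).+2.-1 * (M * M ^+ (size w).+1) =
   eta * (M * (eta ^+ (size w) * M ^+ (size w).+1)) by rewrite /= exprS; ring.
rewrite ler_wpM2l ?(ltW eta_gt0) // ler_pM ?N_ge0 //; first exact: letter_leM.
Qed.

End Norm.

Lemma modp_entry (p : nat) (A B : 'M[int]_2) : prime p ->
  redp p A = redp p B -> A != B -> exists i j, (p%:Z <= `|A i j - B i j|).
Proof.
move=> pp eAB nAB.
have : ~~ [forall i, forall j, A i j == B i j].
  apply: contra nAB => /forallP H; apply/eqP/matrixP => i j.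
  exact/eqP/(forallP (H i)).
rewrite negb_forall => /existsP [i]; rewrite negb_forall => /existsP [j nij].
exists i, j.
have hd : (p %| A i j - B i j)%Z.
  rewrite (dvdz_pcharf (pchar_Fp pp)) intrB.
  have := congr1 (fun X : 'M['F_p]_2 => X i j) eAB; rewrite /redp !mxE => ->.
  by rewrite subrr.
move: hd; rewrite dvdzE => hd.
have hnz : (0 < `|A i j - B i j|)%N by rewrite absz_gt0 subr_eq0.
have := dvdn_leq hnz hd; rewrite -abszE.
by rewrite lez_nat.
Qed.

Lemma finish (R : realFieldType) (d : nat) (s : 'I_d -> 'M[int]_2) (N : 'M[R]_2 -> R) (eta M : R)
  (p k : nat) (x0 : 'I_d * bool) (w : seq ('I_d * bool)) i j :
  (forall i, inSL2Z (s i)) -> is_norm N ->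
  (forall X : 'M[R]_2, maxabs X <= N X) ->
  (forall a b : 'M[int]_2, inSL2Z a -> inSL2Z b ->
      N (toR R (a * b)) / (N (toR R a) * N (toR R b)) <= eta) ->
  M = \big[Num.max/0]_(x : 'I_d * bool) N (toR R (letter s x)) ->
  w != [::] -> (size w <= k)%N ->
  (p%:Z <= 2 * `|eval_word s w i j|) ->
  eta * p%:R / 2 <= (eta * M) ^+ k.
Proof.
move=> sSL Nn Nmax Heta HM wn wk hp.
have etap := eta_gt0 Nn Nmax Heta.
have hC : p%:R / 2 <= N (toR R (eval_word s w)).
  apply: le_trans (Nmax _); apply: le_trans (maxabs_ge _ i j).
  rewrite /toR mxE -intr_norm ler_pdivrMr // .
  have -> : (p%:R : R) = (p%:Z)%:~R by [].
  have -> : (2 : R) = (2%:Z)%:~R by [].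
  by rewrite -intrM ler_int mulrC.
have hW := word_bound sSL Nn Nmax Heta HM wn.
have h1 : eta * p%:R / 2 <= (eta * M) ^+ size w.
  rewrite -mulrA; apply: le_trans (ler_wpM2l (ltW etap) (le_trans hC hW)) _.
  clear wk hp hC hW; case: w wn => [|y w] // _.
  by rewrite /= exprMn [eta ^+ _.+1]exprS mulrA.
apply: le_trans h1 _; apply: ler_weXn2l => //.
exact: etaM_ge1 sSL Nn Nmax Heta HM x0.
Qed.
Unset Implicit Arguments.

Theorem lemma2p4 (R : realFieldType) (d : nat) (s : 'I_d -> 'M[int]_2) (p : nat)
    (N : 'M[R]_2 -> R) (eta M : R) (g : nat) :
  (forall i, inSL2Z (s i)) ->
  free_basis s ->
  prime p ->
  (forall x y : 'I_d * bool,
      redp p (letter s x) = redp p (letter s y) -> letter s x = letter s y) ->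
  is_norm N ->
  (forall X : 'M[R]_2, maxabs X <= N X) ->
  (forall a b : 'M[int]_2, inSL2Z a -> inSL2Z b ->
      N (toR R (a * b)) / (N (toR R a) * N (toR R b)) <= eta) ->
  (forall e : R, (forall a b : 'M[int]_2, inSL2Z a -> inSL2Z b ->
      N (toR R (a * b)) / (N (toR R a) * N (toR R b)) <= e) -> eta <= e) ->
  M = \big[Num.max/0]_(x : 'I_d * bool) N (toR R (letter s x)) ->
  is_girth (fun X : 'M['F_p]_2 => [exists x : 'I_d * bool, X == redp p (letter s x)]) g ->
  eta * p%:R / 2 <= (eta * M) ^+ (uphalf g).
Proof.
move=> sSL free pp _ Nn Nmax Heta _ HM [g1 [ts [Hsz Hall Hadj Hprod]] _].
have [xs exs] := lift_seq Hall.
subst ts; rewrite size_map in Hsz.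
have red : reduced_word xs by apply: reduced_of sSL _ => i; rewrite -(size_map (fun x => redp p (letter s x))); exact: Hadj.
have xsn : xs != [::] by apply: contraTneq g1 => xs0; rewrite -Hsz xs0.
have [x0 _] : exists x0 : 'I_d * bool, True by move: xsn; case: (xs) => // x _ _; exists x.
have e1 : redp p (eval_word s xs) = 1 by rewrite redp_eval.
set k := uphalf g.
set A := eval_word s (take k xs).
set D := eval_word s (drop k xs).
set B := eval_word s (inv_word (drop k xs)).
have eAD : eval_word s xs = A * D by rewrite -eval_cat cat_take_drop.
have eBD : B * D = 1 by apply: eval_inv.
have nAB : A != B.
  apply/eqP => eAB; have := free _ red xsn; by rewrite eAD eAB eBD eqxx.
have eAB : redp p A = redp p B.
  have h1 : redp p A *m redp p D = 1%:M by rewrite mulmxE -redpM -eAD e1.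
  have h2 : redp p B *m redp p D = 1%:M by rewrite mulmxE -redpM eBD redp1.
  have h3 := mulmx1C h2.
  by rewrite -[redp p A]mulmx1 -h3 mulmxA h1 mul1mx.
have [i [j hij]] := modp_entry pp eAB nAB.
have kg : (k <= g)%N by rewrite /k; case: (g) => // n; rewrite uphalfE; lia.
have szA : size (take k xs) = k by rewrite size_take Hsz; case: ltnP kg => //; lia.
have szB : size (inv_word (drop k xs)) = (g - k)%N by rewrite size_inv size_drop Hsz.
have p2 : (2 <= p)%N by apply: prime_gt1.
case: (leP `|B i j| `|A i j|) => hle.
  apply: (finish x0 (w := take k xs) (i := i) (j := j) sSL Nn Nmax Heta HM).
  - by rewrite -size_eq0 szA /k; case: (g) g1 => // n _; rewrite uphalfE.
  - by rewrite szA.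
  - rewrite -/A; lia.
have hn := ler_normB (A i j) (B i j).
case: (posnP (g - k)%N) => gk.
  exfalso.
  have : drop k xs = [::] by apply/eqP; rewrite -size_eq0 size_drop Hsz gk.
  move=> hd; move: hle hij hn; rewrite /B hd /eval_word /= !mxE.
  case: (i == j) => /=; lia.
apply: (finish x0 (w := inv_word (drop k xs)) (i := i) (j := j) sSL Nn Nmax Heta HM).
- by rewrite -size_eq0 szB -lt0n.
- by rewrite szB /k; case: (g) => // n; rewrite uphalfE; lia.
- rewrite -/B; lia.
Qed.
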